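(* Let $E$ be a linear space of $\mathbf{b}\times\mathbf{c}$ complex matrices and $r\le \min\{\mathbf{b},\mathbf{c}\}$. Suppose that, in suitable bases, every $X\in E$ has the block form $$X=\begin{pmatrix} \mathbf{x}&W\\ U&0\end{pmatrix}$$ with $\mathbf{x}$ of size $r\times r$, $W$ of size $r\times(\mathbf{c}-r)$, $U$ of size $(\mathbf{b}-r)\times r$ and zero lower-right block, and that $U\mathbf{x}^kW=0$ for all $k\ge 0$. Then every element of $E$ has rank at most $r$. *)

(* Defs.v *)
From HB Require Import structures.
From mathcomp Require Import all_boot all_order all_algebra.
From mathcomp Require Import complex.
From mathcomp Require Import reals.
Set Implicit Arguments. Unset Strict Implicit. Unset Printing Implicit Defensive.
Import Order.TTheory GRing.Theory Num.Theory.

(* Main.v *)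
Require Import Defs.
From HB Require Import structures.
From mathcomp Require Import all_boot all_order all_algebra.
From mathcomp Require Import complex.
From mathcomp Require Import reals.
From mathcomp Require Import zify.
Import Order.TTheory GRing.Theory Num.Theory.
Local Open Scope ring_scope.

Section Aux.
Variable F : fieldType.

Lemma key_rank r m n p (x : 'M[F]_r) (W : 'M_(r, n)) (U : 'M_(m, r))
  (Lm : 'M_(p, r)) :
  (U <= Lm)%MS -> Lm *m W = 0 -> (Lm *m x <= Lm)%MS ->
  (\rank (block_mx x W U 0) <= r)%N.
Proof.
move=> sUL LW0 sLx.
set C := (Lm^C)%MS.
set T := row_mx x W.
set S := (row_mx Lm (0 : 'M_(p, n)) + C *m T)%MS.
have sub : (block_mx x W U 0 <= S)%MS.
  rewrite block_mxEv col_mx_sub; apply/andP; split.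
    rewrite -[row_mx x W]mul1mx -/T.
    have h1 : (1%:M *m T <= (Lm + C)%MS *m T)%MS.
      by apply: submxMr; rewrite sub1mx addsmx_compl_full.
    apply: (submx_trans h1); rewrite addsmxMr; apply: addsmxS => //.
    rewrite mul_mx_row LW0.
    case/submxP: sLx => D ->.
    have -> : row_mx (D *m Lm) (0 : 'M_(p, n)) = D *m row_mx Lm (0 : 'M_(p, n)).
      by rewrite mul_mx_row mulmx0.
    exact: submxMl.
  case/submxP: sUL => D ->.
  apply: submx_trans (addsmxSl _ _).
  have -> : row_mx (D *m Lm) (0 : 'M_(m, n)) = D *m row_mx Lm (0 : 'M_(p, n)).
    by rewrite mul_mx_row mulmx0.
  exact: submxMl.
apply: leq_trans (mxrankS sub) _.
apply: leq_trans (mxrank_adds_leqif _ _).1 _.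
have e1 : (\rank (row_mx Lm (0 : 'M_(p, n))) <= \rank Lm)%N.
  have -> : row_mx Lm (0 : 'M_(p, n)) = Lm *m row_mx 1%:M 0.
    by rewrite mul_mx_row mulmx1 mulmx0.
  exact: mxrankM_maxl.
have e2 : (\rank (C *m T) <= \rank C)%N by exact: mxrankM_maxl.
have e3 : \rank C = (r - \rank Lm)%N by rewrite mxrank_compl.
have e4 : (\rank Lm <= r)%N by exact: rank_leq_col.
lia.
Qed.

Lemma pigeon (f : nat -> nat) N : (forall j, f j <= N)%N ->
  exists j, (f j.+1 <= f j)%N.
Proof.
move=> hb.
have: forall k, (exists j, (f j.+1 <= f j)%N) \/ (k <= f k)%N.
  elim=> [|k [IH|IH]]; [by right | by left |].
  case: (leqP (f k.+1) (f k)) => h; first by left; exists k.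
  by right; apply: leq_ltn_trans IH h.
move/(_ N.+1) => [//|h]; have := hb N.+1; lia.
Qed.

Lemma single_rank r m n (x : 'M[F]_r) (W : 'M_(r, n)) (U : 'M_(m, r)) :
  (forall k, U *m x ^+ k *m W = 0) ->
  (\rank (block_mx x W U 0) <= r)%N.
Proof.
move=> hk.
pose L j := (\sum_(k < j) <<U *m x ^+ k>>)%MS.
have LW j : L j *m W = 0.
  apply/sub_kermxP/sumsmx_subP => k _; rewrite genmxE.
  exact/sub_kermxP/hk.
have Lsucc j : (L j <= L j.+1)%MS.
  by rewrite /L big_ord_recr /= addsmxSl.
have UL j : (U <= L j.+1)%MS.
  apply: (sumsmx_sup ord0) => //; rewrite genmxE /= expr0 mulmx1 //.
have Lx j : (L j *m x <= L j.+1)%MS.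
  rewrite /L sumsmxMr; apply/sumsmx_subP => k _.
  have hk1 : (k.+1 < j.+1)%N by rewrite ltnS.
  apply: (sumsmx_sup (Ordinal hk1)) => //=.
  by rewrite (eqmxMr _ (genmxE _)) -mulmxA mulmxE -exprSr genmxE.
have [j hj] := pigeon (fun j => \rank (L j.+1)) r (fun j => rank_leq_col (L j.+1)).
have eqL : (L j.+2 <= L j.+1)%MS.
  by rewrite -(mxrank_leqif_sup (Lsucc j.+1)).2 eqn_leq hj mxrankS ?Lsucc.
apply: (@key_rank r m n r x W U (L j.+1)) => //.
exact: submx_trans (Lx _) eqL.
Qed.

End Aux.

Theorem mainTheorem5 (R : realType) (r m n : nat)
  (E : {vspace 'M[R[i]]_(r + m, r + n)})
  (P : 'M[R[i]]_(r + m)) (Q : 'M[R[i]]_(r + n))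
  (hP : P \in unitmx) (hQ : Q \in unitmx)
  (hblock : forall X, X \in E -> drsubmx (P *m X *m Q) = 0)
  (hUxW : forall X, X \in E -> forall k : nat,
      dlsubmx (P *m X *m Q) *m (ulsubmx (P *m X *m Q)) ^+ k
        *m ursubmx (P *m X *m Q) = 0) :
  forall X, X \in E -> (\rank X <= r)%N.
Proof.
move=> X hX.
have -> : \rank X = \rank (P *m X *m Q).
  by rewrite mxrankMfree ?row_free_unit // eqmxMfull ?row_full_unit.
rewrite -[P *m X *m Q]submxK hblock //.
exact: single_rank (hUxW X hX).
Qed.
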